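(* Let $F_k$ denote the Fibonacci numbers ($F_0=0$, $F_1=1$, $F_{k+2}=F_k+F_{k+1}$). For all integers $i,j$ for which all indices below are nonnegative, $\gcd(F_{i-1}+F_{j+1},\,F_i-F_j)=\gcd(F_{i-3}+F_{j+3},\,F_{i-2}-F_{j+2})$. *)

(* Defs.v *)
From mathcomp Require Import all_boot all_order all_algebra.
Set Implicit Arguments. Unset Strict Implicit. Unset Printing Implicit Defensive.
Import Order.TTheory GRing.Theory Num.Theory.

Fixpoint fib (k : nat) : nat :=
  match k with
  | 0 => 0
  | 1 => 1
  | (k'.+1 as k1).+1 => fib k' + fib k1
  end.

(* Main.v *)
Require Import Defs.
From mathcomp Require Import all_boot all_order all_algebra.
From mathcomp Require Import ring.
Import Order.TTheory GRing.Theory Num.Theory.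
Local Open Scope ring_scope.

Lemma gcd_aux (a b : int) : gcdz a b = gcdz (2 * a - b) (b - a).
Proof.
have h1 : gcdz a b = gcdz a (b - a).
  by rewrite -(gcdzMDl 1 a (b - a)); congr gcdz; ring.
have h2 : gcdz (2 * a - b) (b - a) = gcdz (b - a) a.
  by rewrite gcdzC -(gcdzMDl (-1) (b - a) a); congr gcdz; ring.
by rewrite h1 h2 gcdzC.
Qed.

Theorem lemma2p3p1 (i j : nat) (hi : (3 <= i)%N) :
  gcdz ((fib i.-1)%:Z + (fib j.+1)%:Z) ((fib i)%:Z - (fib j)%:Z)
  = gcdz ((fib (i - 3))%:Z + (fib j.+3)%:Z) ((fib (i - 2))%:Z - (fib j.+2)%:Z).
Proof.
case: i hi => [|[|[|k]]] // _.
have -> : (k.+3 - 3)%N = k by rewrite !subSS subn0.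
have -> : (k.+3 - 2)%N = k.+1 by rewrite !subSS subn0.
rewrite gcd_aux -/(predn k.+3).
have E1 : fib k.+2 = (fib k + fib k.+1)%N by [].
have E2 : fib k.+3 = (fib k.+1 + fib k.+2)%N by [].
have E3 : fib j.+2 = (fib j + fib j.+1)%N by [].
have E4 : fib j.+3 = (fib j.+1 + fib j.+2)%N by [].
rewrite E2 E4 E3 E1 !PoszD.
congr gcdz; ring.
Qed.
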